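(* Let $X_t$ be the random walk on a finite T-graph all of whose segments have length at most $L$. For $r\ge L$ and $X_0\in B(0,r)$, let $\tau_r$ be the first time $X_t$ exits $B(0,r)$ or reaches a boundary vertex. Then for all integers $n\ge1$, $\mathbb P(\tau_r\ge 18nr^2)\le 2^{-n}$.
   Context: A finite T-graph is a finite collection of pairwise disjoint open segments $S_i$ and points $x_j$ in $\mathbb C$ such that $(\cup S_i)\cup(\cup x_j)$ is closed and connected and every $x_j$ lies on the boundary of the unbounded component of its complement; the $x_j$ are boundary vertices. Vertices are all endpoints of segments; every non-boundary (interior) vertex $x$ lies in exactly one open segment $S$. The random walk on the T-graph is the continuous-time pure jump Markov process in which boundary vertices are absorbing and from an interior vertex $x\in S$, with $x^+,x^-$ the neighbouring vertices of $x$ on $\overline S$ on either side, it jumps to $x^\pm$ at rate $\frac{1}{|x^\pm-x|\,|x^+-x^-|}$. (This walk is a martingale and $\frac{d}{dt}\mathrm{Tr}\,\mathrm{Var}(X_t)=1$ before absorption.) *)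

(* Defs.v *)
From HB Require Import structures.
From mathcomp Require Import all_boot all_order all_algebra.
From mathcomp Require Import all_classical all_reals all_analysis.
Import numFieldNormedType.Exports.
Set Implicit Arguments. Unset Strict Implicit. Unset Printing Implicit Defensive.
Import Order.TTheory GRing.Theory Num.Theory.
Local Open Scope classical_set_scope.
Local Open Scope ring_scope.

(* The plane C is modelled as R * R (product topology = Euclidean topology). *)
Section TGraph.
Variable R : realType.

Local Notation pt := (R * R)%type.

Definition pnorm (p : pt) : R := Num.sqrt (p.1 ^+ 2 + p.2 ^+ 2).
Definition pdist (p q : pt) : R := pnorm (p.1 - q.1, p.2 - q.2).

Definition lerp (a b : pt) (t : R) : pt :=
  (a.1 + t * (b.1 - a.1), a.2 + t * (b.2 - a.2)).

Definition oseg (a b : pt) : set pt :=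
  [set x | exists t : R, [/\ 0 < t, t < 1 & x = lerp a b t]].
Definition cseg (a b : pt) : set pt :=
  [set x | exists t : R, [/\ 0 <= t, t <= 1 & x = lerp a b t]].

Definition bounded_set (S : set pt) : Prop :=
  exists M : R, forall x, S x -> pnorm x <= M.

Definition topo_boundary (S : set pt) : set pt := closure S `\` interior S.

Definition seg0 : pt * pt := ((0, 0), (0, 0)).

Definition tg_union (segs : seq (pt * pt)) (bpts : seq pt) : set pt :=
  [set x | (exists2 s, s \in segs & oseg s.1 s.2 x) \/ x \in bpts].

Definition verts (segs : seq (pt * pt)) (bpts : seq pt) : seq pt :=
  undup (flatten [seq [:: s.1; s.2] | s <- segs] ++ bpts).

Definition is_Tgraph (segs : seq (pt * pt)) (bpts : seq pt) : Prop :=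
  (forall s, s \in segs -> s.1 != s.2) /\
      (forall i j, (i < size segs)%N -> (j < size segs)%N -> i != j ->
         forall x, oseg (nth seg0 segs i).1 (nth seg0 segs i).2 x ->
                   ~ oseg (nth seg0 segs j).1 (nth seg0 segs j).2 x) /\
      closed (tg_union segs bpts) /\
      connected (tg_union segs bpts) /\
      (forall x, x \in bpts ->
         exists y, [/\ (~` tg_union segs bpts) y,
           ~ bounded_set (connected_component (~` tg_union segs bpts) y) &
           topo_boundary (connected_component (~` tg_union segs bpts) y) x]) /\
      (forall x, x \in verts segs bpts -> x \notin bpts ->
         exists i, [/\ (i < size segs)%N,
           oseg (nth seg0 segs i).1 (nth seg0 segs i).2 x &
           forall j, (j < size segs)%N ->
             oseg (nth seg0 segs j).1 (nth seg0 segs j).2 x -> j = i]).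

Definition nverts segs bpts := size (verts segs bpts).

Definition vtx segs bpts (i : 'I_(nverts segs bpts)) : pt :=
  nth (0, 0) (verts segs bpts) i.

Section Walk.
Variables (segs : seq (pt * pt)) (bpts : seq pt).
Local Notation n := (nverts segs bpts).
Local Notation v := (@vtx segs bpts).

(* j is one of the two neighbours x^+, x^- of the interior vertex x = v i on
   the closure of the open segment S containing x: a vertex of the closed
   segment, different from x, with no vertex strictly between x and it. *)
Definition nbr (i j : 'I_n) : bool :=
  `[< [/\ v i \notin bpts, j != i &
        exists2 s, s \in segs &
          [/\ oseg s.1 s.2 (v i), cseg s.1 s.2 (v j) &
              forall k : 'I_n, ~ oseg (v i) (v j) (v k)]] >].

(* |x^+ - x^-| : the distance between the two neighbours *)
Definition nbr_span (i : 'I_n) : R :=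
  \big[Num.max/0]_(j | nbr i j) \big[Num.max/0]_(k | nbr i k) pdist (v j) (v k).

Definition rate (i j : 'I_n) : R :=
  if nbr i j then (pdist (v j) (v i) * nbr_span i)^-1 else 0.

(* generator of the walk (boundary vertices absorbing: zero rows) *)
Definition generator : 'M[R]_n :=
  \matrix_(i, j) if i == j then - \sum_(k | k != i) rate i k else rate i j.

Definition alive (r : R) (i : 'I_n) : bool := (v i \notin bpts) && (pnorm (v i) < r).

Definition killed_gen (r : R) : 'M[R]_n :=
  \matrix_(i, j) if alive r i && alive r j then generator i j else 0.

Definition mpow (M : 'M[R]_n) (k : nat) : 'M[R]_n := iter k (mulmx M) 1%:M.

Definition alive_ind (r : R) : 'cV[R]_n := \col_i (alive r i)%:R.

(* P_{X_0 = v i}(tau_r > t) = (exp (t K_r) 1_{alive})_i, with the matrix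
   exponential given by its power series. *)
Definition survival (r t : R) (i : 'I_n) : R :=
  limn (fun N => \sum_(k < N) (t ^+ k / (k`!)%:R) *
                   (mpow (killed_gen r) k *m alive_ind r) i 0).

End Walk.
End TGraph.

(* Main.v *)
Require Import Defs.
From HB Require Import structures.
From mathcomp Require Import all_boot all_order all_algebra.
From mathcomp Require Import all_classical all_reals all_analysis.
Import numFieldNormedType.Exports.
Import Order.TTheory GRing.Theory Num.Theory.
Local Open Scope ring_scope.
From mathcomp Require Import ring lra.

Module MAn1.
Import numFieldNormedType.Exports.
Import Order.TTheory GRing.Theory Num.Theory.
Local Open Scope ring_scope.
Set Implicit Arguments. Unset Strict Implicit. Unset Printing Implicit Defensive.

Section Ex.
Variables (R : realType) (N : nat).
Implicit Types (M : 'M[R]_N) (v w : 'cV[R]_N).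

Definition mp M k : 'M[R]_N := iter k (mulmx M) 1%:M.

Lemma mpS M k : mp M k.+1 = M *m mp M k. Proof. reflexivity. Qed.
Lemma mpSr M k : mp M k.+1 = mp M k *m M.
Proof.
elim: k => [|k IH]; first by rewrite /mp /= mulmx1 mul1mx.
by rewrite {1}mpS {1}IH mulmxA.
Qed.

Definition n1 v : R := \sum_j `|v j 0|.
Definition rho M : R := \sum_i \sum_j `|M i j|.

Lemma n1_ge0 v : 0 <= n1 v. Proof. by apply: sumr_ge0 => j _. Qed.
Lemma rho_ge0 M : 0 <= rho M.
Proof. by apply: sumr_ge0 => i _; apply: sumr_ge0. Qed.

Lemma entry_le v i : `|v i 0| <= n1 v.
Proof.
rewrite /n1 (bigD1 i) //= lerDl; exact: sumr_ge0.
Qed.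

Lemma Mentry_le M i j : `|M i j| <= rho M.
Proof.
rewrite /rho (bigD1 i) //= (bigD1 j) //= -addrA lerDl.
apply: addr_ge0; first exact: sumr_ge0.
by apply: sumr_ge0 => k _; apply: sumr_ge0.
Qed.

Lemma n1_mul M v : n1 (M *m v) <= rho M * n1 v.
Proof.
rewrite /n1 /rho mulr_suml; apply: ler_sum => i _.
rewrite mxE (le_trans (ler_norm_sum _ _ _)) // mulr_suml; apply: ler_sum => j _.
rewrite normrM ler_wpM2l //.
exact: entry_le.
Qed.

Lemma mp_bound M v k : n1 (mp M k *m v) <= rho M ^+ k * n1 v.
Proof.
elim: k => [|k IH]; first by rewrite /mp /= mul1mx expr0 mul1r.
rewrite mpS -mulmxA exprS -mulrA (le_trans (n1_mul _ _)) //.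
by rewrite ler_wpM2l // rho_ge0.
Qed.

Definition coef M v i k : R := (mp M k *m v) i 0 / k`!%:R.
Definition ex M v t i : R := limn (pseries (coef M v i) t).

Lemma cvg_ex M v i t : cvgn (pseries (coef M v i) t).
Proof.
apply: normed_cvg.
pose e := exp_coeff (rho M * `|t|).
apply: (@series_le_cvg _ _ (fun k => n1 v * e k)).
- by move=> k /=; exact: normr_ge0.
- by move=> k; rewrite mulr_ge0 ?n1_ge0 // /e exp_coeff_ge0 // mulr_ge0 ?rho_ge0.
- move=> k /=; rewrite /coef /e /exp_coeff /= normrM normrM normfV normr_nat normrX.
  have h1 := entry_le (mp M k *m v) i; have h2 := mp_bound M v k.
  have hb : 0 <= `|t| ^+ k / k`!%:R by rewrite divr_ge0 ?exprn_ge0.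
  have H := ler_wpM2r hb (le_trans h1 h2).
  have E1 : `|(mp M k *m v) i 0| / k`!%:R * `|t| ^+ k =
    `|(mp M k *m v) i 0| * (`|t| ^+ k / k`!%:R) by ring.
  rewrite E1 (le_trans H) // exprMn le_eqVlt; apply/orP; left; apply/eqP; ring.
- have -> : series (fun k => n1 v * e k) = n1 v *: series e.
    by apply/funext => m; rewrite /series /= -mulr_sumr.
  apply: is_cvgZl_tmp; exact: is_cvg_series_exp_coeff.
Qed.

Lemma diffs_coef M v i : pseries_diffs (coef M v i) = coef M (M *m v) i.
Proof.
apply/funext => k; rewrite /pseries_diffs /coef mpSr -mulmxA factS natrM.
have h1 : (k.+1)%:R != 0 :> R by rewrite pnatr_eq0.
have h2 : (k`!)%:R != 0 :> R by rewrite pnatr_eq0 -lt0n fact_gt0.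
field; rewrite h2 /=; by rewrite addrC natr1.
Qed.

Lemma is_derive_ex M v (i : 'I_N) (t : R) :
  is_derive t (1:R) (fun s => ex M v s i) (ex M (M *m v) t i).
Proof.
rewrite /ex -diffs_coef.
apply: (@pseries_snd_diffs _ _ (`|t| + 1)).
- exact: cvg_ex.
- rewrite diffs_coef; exact: cvg_ex.
- rewrite !diffs_coef; exact: cvg_ex.
- by rewrite [ltRHS]ger0_norm ?ltrDl // addr_ge0.
Qed.

End Ex.

End MAn1.
Import MAn1.

Module MAn2.
Import numFieldNormedType.Exports.
Import Order.TTheory GRing.Theory Num.Theory.
Local Open Scope ring_scope.
Set Implicit Arguments. Unset Strict Implicit. Unset Printing Implicit Defensive.

Section Ex2.
Variables (R : realType) (N : nat).
Implicit Types (M : 'M[R]_N) (v w : 'cV[R]_N).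

Lemma lim_sumS (I : eqType) (s : seq I) (F : I -> nat -> R) :
  (forall j, cvgn (F j)) ->
  cvgn (fun n => \sum_(j <- s) F j n) /\
  limn (fun n => \sum_(j <- s) F j n) = \sum_(j <- s) limn (F j).
Proof.
move=> hc; elim: s => [|a s [IHc IHl]].
  have -> : (fun n => \sum_(j <- [::]) F j n) = (fun=> 0).
    by apply/funext => n; rewrite big_nil.
  by rewrite big_nil; split; [exact: is_cvg_cst | exact: lim_cst].
have -> : (fun n => \sum_(j <- a :: s) F j n) =
   (F a + (fun n => \sum_(j <- s) F j n)).
  by apply/funext => n; rewrite big_cons.
rewrite big_cons; split; first exact: is_cvgD.
by rewrite limD // IHl.
Qed.

Lemma ex0 M v i : ex M v 0 i = v i 0.
Proof.
rewrite /ex; apply: (@lim_near_cst R) => //.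
near=> m; rewrite -[m]prednK; last by near: m.
rewrite /pseries /series /= big_nat_recl // big1 ?addr0.
  by rewrite /coef /mp /= mul1mx expr0 mulr1 divr1.
by move=> k _; rewrite expr0n /= mulr0.
Unshelve. all: by end_near. Qed.

Lemma mp_ge0 M k : (forall i j, 0 <= M i j) -> forall i j, 0 <= mp M k i j.
Proof.
move=> hM; elim: k => [|k IH] i j.
  by rewrite /mp /= mxE ler0n.
rewrite mpS mxE; apply: sumr_ge0 => l _; exact: mulr_ge0.
Qed.

Lemma ex_ge0 M v t i : (forall i j, 0 <= M i j) -> (forall j, 0 <= v j 0) ->
  0 <= t -> 0 <= ex M v t i.
Proof.
move=> hM hv ht; apply: limr_ge; first exact: cvg_ex.
apply: nearW => n; rewrite /series /=; apply: sumr_ge0 => k _.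
rewrite /coef mulr_ge0 ?exprn_ge0 // divr_ge0 // mxE.
by apply: sumr_ge0 => l _; rewrite mulr_ge0 // mp_ge0.
Qed.

Lemma coefD M v w i k : coef M (v + w) i k = coef M v i k + coef M w i k.
Proof. by rewrite /coef mulmxDr mxE mulrDl. Qed.

Lemma coefZ M a v i k : coef M (a *: v) i k = a * coef M v i k.
Proof. by rewrite /coef -scalemxAr mxE mulrA. Qed.

Lemma exD M v w t i : ex M (v + w) t i = ex M v t i + ex M w t i.
Proof.
rewrite /ex; have -> : pseries (coef M (v + w) i) t = pseries (coef M v i) t + pseries (coef M w i) t.
  apply/funext => n.
  rewrite /pseries /series /=.
  transitivity (\sum_(0 <= k < n) coef M v i k * t ^+ k + \sum_(0 <= k < n) coef M w i k * t ^+ k); last by [].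
  by rewrite -big_split /=; apply: eq_bigr => k _; rewrite coefD mulrDl.
by rewrite limD; [reflexivity| exact: cvg_ex | exact: cvg_ex].
Qed.

Lemma exZ M a v t i : ex M (a *: v) t i = a * ex M v t i.
Proof.
rewrite /ex; have -> : pseries (coef M (a *: v) i) t = a *: pseries (coef M v i) t.
  apply/funext => n.
  rewrite /pseries /series /=.
  transitivity (a * \sum_(0 <= k < n) coef M v i k * t ^+ k); last by [].
  by rewrite mulr_sumr; apply: eq_bigr => k _; rewrite coefZ mulrA.
by rewrite limZl_tmp; [reflexivity | exact: cvg_ex].
Qed.

Lemma exM M v t i : ex M (M *m v) t i = \sum_j M i j * ex M v t j.
Proof.
have E : forall k, coef M (M *m v) i k = \sum_j M i j * coef M v j k.
  move=> k; rewrite /coef mulmxA -mpSr mpS -mulmxA mxE mulr_suml.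
  by apply: eq_bigr => j _; rewrite mulrA.
rewrite /ex; have -> : pseries (coef M (M *m v) i) t =
   (fun n => \sum_(j <- index_enum 'I_N) (M i j *: pseries (coef M v j) t) n).
  apply/funext => n; rewrite /pseries /series /=.
  under eq_bigr do rewrite E mulr_suml.
  rewrite exchange_big /=; apply: eq_bigr => j _.
  transitivity (M i j * \sum_(0 <= k < n) coef M v j k * t ^+ k); last by [].
  by rewrite mulr_sumr; apply: eq_bigr => k _; rewrite mulrA.
have hc : forall j, cvgn (M i j *: pseries (coef M v j) t).
  by move=> j; apply: is_cvgZl_tmp; exact: cvg_ex.
rewrite (proj2 (lim_sumS _ hc)); apply: eq_bigr => j _.
by rewrite limZl_tmp; [reflexivity | exact: cvg_ex].
Qed.

End Ex2.

End MAn2.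
Import MAn2.

Module MAn3.
Import numFieldNormedType.Exports.
Import Order.TTheory GRing.Theory Num.Theory.
Local Open Scope ring_scope.
Set Implicit Arguments. Unset Strict Implicit. Unset Printing Implicit Defensive.

Section Ex3.
Variables (R : realType) (N : nat).
Implicit Types (M A K : 'M[R]_N) (v w : 'cV[R]_N).

Lemma sum_delta (i : 'I_N) (f : 'I_N -> R) : \sum_l (l == i)%:R * f l = f i.
Proof.
rewrite (bigD1 i) //= eqxx mul1r big1 ?addr0 // => l /negPf ->; exact: mul0r.
Qed.

Lemma is_derive_ex_shift A v (t s : R) i :
  is_derive s (1:R) (fun s => ex A v (t - s) i) (- ex A (A *m v) (t - s) i).
Proof.
have hg : is_derive s (1:R) (fun s => t - s) (0 - 1).
  exact: is_deriveB.
have := @is_derive1_comp R (fun s => ex A v s i) (fun s => t - s) s _ _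
   (is_derive_ex A v i (t - s)) hg.
by rewrite sub0r mulrN1.
Qed.

Lemma dual A (z : R -> 'cV[R]_N) w t :
  (forall s i, is_derive s (1:R) (fun s => z s i 0) ((A *m z s) i 0)) ->
  \sum_i w i 0 * z t i 0 = \sum_i ex A^T w t i * z 0 i 0.
Proof.
move=> hz.
pose h (i : 'I_N) := fun s => ex A^T w (t - s) i * z s i 0.
pose Phi := \sum_(i < N) h i.
have PhiE s : Phi s = \sum_i ex A^T w (t - s) i * z s i 0.
  by rewrite /Phi fct_sumE.
have D s : is_derive s (1:R) Phi 0.
  have Di : forall i, is_derive s (1:R) (h i)
     (ex A^T w (t - s) i * (A *m z s) i 0 - z s i 0 * ex A^T (A^T *m w) (t - s) i).
    move=> i.
    have := is_deriveM (is_derive_ex_shift A^T w t s i) (hz s i).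
    rewrite /GRing.scale /= => H.
    apply: is_derive_eq H _; ring.
  apply: is_derive_eq (is_derive_sum Di) _.
  rewrite big_split /= sumrN; apply/eqP; rewrite subr_eq0; apply/eqP.
  under eq_bigr do rewrite mxE big_distrr /=.
  under [RHS]eq_bigr do rewrite exM big_distrr /=.
  rewrite [RHS]exchange_big /=; apply: eq_bigr => i _; apply: eq_bigr => j _.
  rewrite mxE; ring.
have := @is_derive_0_is_cst R Phi t 0 D.
by rewrite !PhiE subrr subr0; under eq_bigr do rewrite ex0.
Qed.

End Ex3.

End MAn3.
Import MAn3.

Module MAn4.
Import numFieldNormedType.Exports.
Import Order.TTheory GRing.Theory Num.Theory.
Local Open Scope ring_scope.
Set Implicit Arguments. Unset Strict Implicit. Unset Printing Implicit Defensive.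

Section Ex4.
Variables (R : realType) (N : nat).
Implicit Types (M A K : 'M[R]_N) (v w : 'cV[R]_N).

Definition delta (i : 'I_N) : 'cV[R]_N := \col_l (l == i)%:R.

Lemma ex_metzler K v t i : (forall i j, i != j -> 0 <= K i j) ->
  (forall j, 0 <= v j 0) -> 0 <= t -> 0 <= ex K v t i.
Proof.
move=> hK hv ht.
pose q := rho K.
pose M := K + q%:M.
have hM : forall i j, 0 <= M^T i j.
  move=> a b; rewrite !mxE; case: (eqVneq b a) => [->|nab].
    rewrite mulr1n /q; have := Mentry_le K a a; have := ler_norm (- K a a).
    rewrite normrN; lra.
  by rewrite mulr0n addr0 hK.
pose z := fun s => \col_j (expR (q * s) * ex K v s j).
have hz : forall s j, is_derive s (1:R) (fun s => z s j 0) ((M *m z s) j 0).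
  move=> s j.
  have he : is_derive s (1:R) (fun s => expR (q * s)) (expR (q * s) * q).
    have hg : is_derive s (1:R) (fun s => q * s) q.
      have := is_deriveM (is_derive_cst q s 1) (is_derive_id s (1:R)).
      rewrite /GRing.scale /= => H; apply: is_derive_eq H _; ring.
    exact: (@is_derive1_comp R expR (fun s => q * s) s _ _ (is_derive_expR _) hg).
  have := is_deriveM he (is_derive_ex K v j s).
  rewrite /GRing.scale /= => H.
  have -> : (fun s => z s j 0) = (fun s => expR (q * s) * ex K v s j).
    by apply/funext => s'; rewrite mxE.
  apply: is_derive_eq H _.
  rewrite mulmxDl mul_scalar_mx !mxE exM mulr_sumr.
  under [in RHS]eq_bigr do rewrite mxE.
  congr (_ + _); last ring.
  by apply: eq_bigr => l _; ring.
have := dual (delta i) t hz.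
rewrite (eq_bigr (fun l => (l == i)%:R * z t l 0)); last by move=> l _; rewrite mxE.
rewrite sum_delta mxE => E.
have : 0 <= expR (q * t) * ex K v t i.
  rewrite E; apply: sumr_ge0 => l _; apply: mulr_ge0.
    apply: ex_ge0 => //; move=> a; rewrite mxE; exact: ler0n.
  by rewrite mxE mulr0 expR0 mul1r ex0.
by rewrite pmulr_rge0 // expR_gt0.
Qed.

End Ex4.

End MAn4.
Import MAn4.

Module MAn5.
Import numFieldNormedType.Exports.
Import Order.TTheory GRing.Theory Num.Theory.
Local Open Scope classical_set_scope.
Local Open Scope ring_scope.
Set Implicit Arguments. Unset Strict Implicit. Unset Printing Implicit Defensive.

Section Ex5.
Variables (R : realType) (N : nat).
Implicit Types (M A K : 'M[R]_N) (v w : 'cV[R]_N).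

Definition exv K v t : 'cV[R]_N := \col_j ex K v t j.

Lemma ex_semigroup K v s t i : ex K v (s + t) i = ex K (exv K v s) t i.
Proof.
pose z1 := fun σ => exv K v (s + σ).
pose z2 := fun σ => exv K (exv K v s) σ.
have h1 : forall σ j, is_derive σ (1:R) (fun σ => z1 σ j 0) ((K *m z1 σ) j 0).
  move=> σ j.
  have hg : is_derive σ (1:R) (fun σ => s + σ) (0 + 1) by exact: is_deriveD.
  have := @is_derive1_comp R (fun x => ex K v x j) (fun σ => s + σ) σ _ _
     (is_derive_ex K v j (s + σ)) hg.
  rewrite add0r mulr1 exM => H.
  have -> : (fun σ => z1 σ j 0) = (fun σ => ex K v (s + σ) j).
    by apply/funext => x; rewrite mxE.
  apply: is_derive_eq H _; rewrite mxE; apply: eq_bigr => l _; by rewrite mxE.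
have h2 : forall σ j, is_derive σ (1:R) (fun σ => z2 σ j 0) ((K *m z2 σ) j 0).
  move=> σ j.
  have := is_derive_ex K (exv K v s) j σ.
  rewrite exM => H.
  have -> : (fun σ => z2 σ j 0) = (fun σ => ex K (exv K v s) σ j).
    by apply/funext => x; rewrite mxE.
  apply: is_derive_eq H _; rewrite mxE; apply: eq_bigr => l _; by rewrite mxE.
have E1 := dual (@delta R N i) t h1.
have E2 := dual (@delta R N i) t h2.
have S1 : \sum_l @delta R N i l 0 * z1 t l 0 = ex K v (s + t) i.
  rewrite (eq_bigr (fun l => (l == i)%:R * z1 t l 0)); last by move=> l _; rewrite mxE.
  by rewrite sum_delta mxE.
have S2 : \sum_l @delta R N i l 0 * z2 t l 0 = ex K (exv K v s) t i.
  rewrite (eq_bigr (fun l => (l == i)%:R * z2 t l 0)); last by move=> l _; rewrite mxE.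
  by rewrite sum_delta mxE.
rewrite -S1 -S2 E1 E2; apply: eq_bigr => l _.
by rewrite !mxE addr0 ex0 mxE.
Qed.

Lemma ex_rowzero K v t l : (forall j, K l j = 0) -> ex K v t l = v l 0.
Proof.
move=> hl; rewrite /ex; apply: (@lim_near_cst R) => //.
near=> m; rewrite -[m]prednK; last by near: m.
rewrite /pseries /series /= big_nat_recl // big1 ?addr0.
  by rewrite /coef /mp /= mul1mx expr0 mulr1 divr1.
move=> k _; rewrite /coef mpS -mulmxA mxE big1 ?mul0r //.
by move=> j _; rewrite hl mul0r.
Unshelve. all: by end_near. Qed.

Lemma ex_neg K v t i : (forall i j, i != j -> 0 <= K i j) ->
  (forall j, v j 0 <= 0) -> 0 <= t -> ex K v t i <= 0.
Proof.
move=> hK hv ht.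
have : 0 <= ex K ((-1) *: v) t i.
  apply: ex_metzler => // j; rewrite mxE; rewrite mulN1r oppr_ge0; exact: hv.
by rewrite exZ mulN1r oppr_ge0.
Qed.

Lemma time_bound K (g a : 'cV[R]_N) (t : R) (i : 'I_N) :
  (forall i j, i != j -> 0 <= K i j) ->
  (forall j, 0 <= g j 0) ->
  (forall j, (K *m g) j 0 + a j 0 <= 0) ->
  (forall j, (K *m a) j 0 <= 0) ->
  0 <= t -> t * ex K a t i <= g i 0.
Proof.
move=> hK hg hKg hKa ht.
pose phi := fun s => ex K g s i + s * ex K a s i.
have D : forall s, is_derive s (1:R) phi
    (ex K (K *m g + a) s i + s * ex K (K *m a) s i).
  move=> s.
  have H2 := is_deriveM (is_derive_id s (1:R)) (is_derive_ex K a i s).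
  have := is_deriveD (is_derive_ex K g i s) H2.
  rewrite /GRing.scale /= => H; apply: is_derive_eq H _.
  by rewrite exD; ring.
have hc : {within `[0, t], continuous phi}.
  apply/continuous_subspaceT => r.
  apply/differentiable_continuous/derivable1_diffP.
  by have [] := D r.
have [c hc1 E] := MVT_segment ht (fun x _ => D x) hc.
have hc0 : 0 <= c by move: hc1; rewrite in_itv /= => /andP[].
have neg : ex K (K *m g + a) c i + c * ex K (K *m a) c i <= 0.
  rewrite -[X in _ <= X]addr0; apply: lerD.
    by apply: ex_neg => // j; rewrite mxE; exact: hKg.
  by rewrite mulr_ge0_le0 // ex_neg.
have : phi t - phi 0 <= 0 by rewrite E subr0 mulr_le0_ge0.
rewrite /phi mul0r addr0 ex0.
have := ex_metzler i hK hg ht.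
lra.
Qed.

End Ex5.

End MAn5.
Import MAn5.

Module MAn6.
Import numFieldNormedType.Exports.
Import Order.TTheory GRing.Theory Num.Theory.
Local Open Scope ring_scope.
Set Implicit Arguments. Unset Strict Implicit. Unset Printing Implicit Defensive.

Section Ex6.
Variables (R : realType) (N : nat).

Lemma iterate (K : 'M[R]_N) (g a : 'cV[R]_N) (C T : R) :
  (forall i j, i != j -> 0 <= K i j) ->
  (forall j, 0 <= g j 0) -> (forall j, g j 0 <= C) ->
  (forall j, (K *m g) j 0 + a j 0 <= 0) ->
  (forall j, (K *m a) j 0 <= 0) ->
  0 < T -> 2 * C <= T ->
  (forall l, a l 0 = 1 \/ (a l 0 = 0 /\ forall j, K l j = 0)) ->
  forall m i, ex K a (m.+1%:R * T) i <= (2 ^+ m.+1)^-1.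
Proof.
move=> hK hg hC hKg hKa hT hCT ha.
have B : forall i, ex K a T i <= 2^-1.
  move=> i; have := time_bound i hK hg hKg hKa (ltW hT).
  have := hC i => h1 h2.
  have h3 : T * ex K a T i <= T * 2^-1 by lra.
  by rewrite ler_pM2l in h3.
have claim : forall m l, ex K a (m.+1%:R * T) l <= (2 ^+ m.+1)^-1 * a l 0.
  elim => [|m IH] l.
    case: (ha l) => [->|[ha0 hl]]; last by rewrite ex_rowzero // ha0 mulr0.
    by rewrite mulr1 expr1 mul1r; apply: B.
  case: (ha l) => [->|[ha0 hl]]; last by rewrite ex_rowzero // ha0 mulr0.
  rewrite mulr1.
  have -> : m.+2%:R * T = m.+1%:R * T + T by rewrite -[m.+2]addn1 natrD; ring.
  rewrite ex_semigroup.
  pose c : R := (2 ^+ m.+1)^-1.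
  have hc : 0 <= c by rewrite invr_ge0 exprn_ge0.
  have : 0 <= ex K (c *: a + (-1) *: exv K a (m.+1%:R * T)) T l.
    apply: ex_metzler => // [j|]; last exact: ltW.
    rewrite !mxE; have := IH j; rewrite /c; lra.
  rewrite exD !exZ.
  have := B l; have -> : (2 ^+ m.+2)^-1 = c * 2^-1 :> R.
    by rewrite /c exprS invfM mulrC.
  move=> hB h.
  have : c * ex K a T l <= c * 2^-1 by rewrite ler_wpM2l.
  lra.
move=> m i; apply: (le_trans (claim m i)).
case: (ha i) => [->|[-> _]]; first by rewrite mulr1.
by rewrite mulr0 invr_ge0 exprn_ge0.
Qed.

End Ex6.

End MAn6.
Import MAn6.

Module MG1.
Import numFieldNormedType.Exports.
Import Order.TTheory GRing.Theory Num.Theory.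
Local Open Scope ring_scope.
Set Implicit Arguments. Unset Strict Implicit. Unset Printing Implicit Defensive.

Section G1.
Variable R : realType.
Local Notation pt := (R * R)%type.
Implicit Types (a b p q y : pt) (t s : R).

Definition E2 a b : R := (b.1 - a.1) ^+ 2 + (b.2 - a.2) ^+ 2.
Definition sq (p : pt) : R := p.1 ^+ 2 + p.2 ^+ 2.
Definition param a b y : R :=
  ((y.1 - a.1) * (b.1 - a.1) + (y.2 - a.2) * (b.2 - a.2)) / E2 a b.

Lemma E2_gt0 a b : a != b -> 0 < E2 a b.
Proof.
case: a b => [a1 a2] [b1 b2]; rewrite xpair_eqE negb_and /E2 /= => H.
case/orP: H => H.
  have : 0 < (b1 - a1) ^+ 2 by rewrite exprn_even_gt0 //= subr_eq0 eq_sym.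
  have := sqr_ge0 (b2 - a2); lra.
have : 0 < (b2 - a2) ^+ 2 by rewrite exprn_even_gt0 //= subr_eq0 eq_sym.
have := sqr_ge0 (b1 - a1); lra.
Qed.

Lemma param_lerp a b t : a != b -> param a b (lerp a b t) = t.
Proof.
move=> /E2_gt0 h; have h' : E2 a b != 0 by rewrite gt_eqF.
move: h'; rewrite /param /lerp /E2 /= => h'; field; exact: h'.
Qed.

Lemma lerp_inj a b t s : a != b -> lerp a b t = lerp a b s -> t = s.
Proof. by move=> ab E; rewrite -(param_lerp t ab) E param_lerp. Qed.

Lemma lerp_comp a b t1 t2 l :
  lerp (lerp a b t1) (lerp a b t2) l = lerp a b (t1 + l * (t2 - t1)).
Proof. by rewrite /lerp /=; congr (_, _); ring. Qed.

Lemma pdist_lerp a b t s :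
  pdist (lerp a b t) (lerp a b s) = `|t - s| * Num.sqrt (E2 a b).
Proof.
rewrite /pdist /pnorm /lerp /E2 /=.
have -> : (a.1 + t * (b.1 - a.1) - (a.1 + s * (b.1 - a.1))) ^+ 2 +
   (a.2 + t * (b.2 - a.2) - (a.2 + s * (b.2 - a.2))) ^+ 2 =
   (t - s) ^+ 2 * ((b.1 - a.1) ^+ 2 + (b.2 - a.2) ^+ 2) by ring.
by rewrite sqrtrM ?sqr_ge0 // sqrtr_sqr.
Qed.

Lemma oseg_lerp a b t1 t2 y : oseg (lerp a b t1) (lerp a b t2) y ->
  exists l, [/\ 0 < l, l < 1 & y = lerp a b (t1 + l * (t2 - t1))].
Proof. by case=> l [h1 h2 ->]; exists l; split => //; rewrite lerp_comp. Qed.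

Lemma lerp_oseg a b t1 t2 l : 0 < l -> l < 1 ->
  oseg (lerp a b t1) (lerp a b t2) (lerp a b (t1 + l * (t2 - t1))).
Proof. by move=> h1 h2; exists l; split => //; rewrite lerp_comp. Qed.

Lemma cseg_lerp a b t : 0 <= t -> t <= 1 -> cseg a b (lerp a b t).
Proof. by move=> h1 h2; exists t. Qed.

End G1.

End MG1.
Import MG1.

Module MG2.
Import numFieldNormedType.Exports.
Import Order.TTheory GRing.Theory Num.Theory.
Local Open Scope ring_scope.
Set Implicit Arguments. Unset Strict Implicit. Unset Printing Implicit Defensive.

Section G2.
Variable R : realType.
Variables (segs : seq ((R * R) * (R * R))) (bpts : seq (R * R)).
Local Notation n := (nverts segs bpts).
Local Notation v := (@vtx R segs bpts).

Lemma vtx_inj (i j : 'I_n) : v i = v j -> i = j.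
Proof.
move=> E; apply/val_inj/eqP.
rewrite -(nth_uniq (0, 0) (ltn_ord i) (ltn_ord j) (undup_uniq _)).
by apply/eqP.
Qed.

Lemma vtx_mem (i : 'I_n) : v i \in verts segs bpts.
Proof. exact: mem_nth. Qed.

Lemma seg_verts s : s \in segs -> s.1 \in verts segs bpts /\ s.2 \in verts segs bpts.
Proof.
move=> hs; rewrite /verts !mem_undup !mem_cat; split; apply/orP; left;
  apply/flatten_mapP; exists s => //; by rewrite !inE eqxx ?orbT.
Qed.

Lemma verts_vtx p : p \in verts segs bpts -> exists k : 'I_n, v k = p.
Proof.
move=> hp; have h : (index p (verts segs bpts) < n)%N by rewrite index_mem.
by exists (Ordinal h); rewrite /vtx /= nth_index.
Qed.

Lemma lerp1 (a b : R * R) : lerp a b 1 = b.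
Proof. by case: a b => [a1 a2] [b1 b2]; rewrite /lerp /=; congr (_, _); ring. Qed.
Lemma lerp0 (a b : R * R) : lerp a b 0 = a.
Proof. by case: a b => [a1 a2] [b1 b2]; rewrite /lerp /=; congr (_, _); ring. Qed.

Lemma btw (a b : R * R) t0 tl tm : (tl < tm < t0) \/ (t0 < tm < tl) ->
  oseg (lerp a b t0) (lerp a b tl) (lerp a b tm).
Proof.
move=> h.
have ne : tl - t0 != 0 by apply/eqP => e; case: h => /andP[]; lra.
pose l := (tm - t0) / (tl - t0).
have -> : tm = t0 + l * (tl - t0) by rewrite /l; field.
apply: lerp_oseg; rewrite /l.
  case: h => /andP[h1 h2].
    have -> : (tm - t0) / (tl - t0) = (t0 - tm) / (t0 - tl) by rewrite -[tm - t0]opprB -[tl - t0]opprB invrN mulrNN.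
    by rewrite divr_gt0 // subr_gt0 // (lt_trans h1 h2).
  by rewrite divr_gt0 // subr_gt0 // (lt_trans h1 h2).
case: h => /andP[h1 h2].
  have -> : (tm - t0) / (tl - t0) = (t0 - tm) / (t0 - tl) by rewrite -[tm - t0]opprB -[tl - t0]opprB invrN mulrNN.
  by rewrite ltr_pdivrMr ?mul1r ?subr_gt0 ?(lt_trans h1 h2) //; lra.
by rewrite ltr_pdivrMr ?mul1r ?subr_gt0 ?(lt_trans h1 h2) //; lra.
Qed.

Lemma nbr_struct (j : 'I_n) : is_Tgraph segs bpts -> v j \notin bpts ->
  exists (p m : 'I_n) (a b : R * R) (t0 tp tm : R),
  [/\ (a, b) \in segs, a != b, v j = lerp a b t0, v p = lerp a b tp & v m = lerp a b tm] /\
  [/\ 0 <= tm, tm < t0, t0 < tp, tp <= 1 & forall l, nbr j l = (l == p) || (l == m)].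
Proof.
move=> HT hj; have [H1 [H2 [_ [_ [_ H6]]]]] := HT.
have [k [hk hos _]] := H6 _ (vtx_mem j) hj.
case Es : (nth (seg0 R) segs k) hos => [a b] /= hos.
have hs : (a, b) \in segs by rewrite -Es mem_nth.
have ab : a != b := H1 _ hs.
have [t0 [t00 t01 ej]] := hos.
have uniq_s : forall s', s' \in segs -> oseg s'.1 s'.2 (v j) -> s' = (a, b).
  move=> s' hs' hos'; have hk' : (index s' segs < size segs)%N by rewrite index_mem.
  case: (eqVneq (index s' segs) k) => [e|ne]; first by rewrite -Es -e nth_index.
  exfalso; apply: (H2 _ _ hk' hk ne (v j)); first by rewrite nth_index.
  by rewrite Es.
pose pr := fun l : 'I_n => param a b (v l).
have onS : forall l, cseg a b (v l) -> [/\ 0 <= pr l, pr l <= 1 & v l = lerp a b (pr l)].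
  move=> l [t [h0 h1 e]]; rewrite /pr e param_lerp //.
have [ia eia] := verts_vtx (proj1 (seg_verts hs)).
have [ib eib] := verts_vtx (proj2 (seg_verts hs)).
have pria : pr ia = 0 by rewrite /pr eia /= -{2}(lerp0 a b) param_lerp.
have prib : pr ib = 1 by rewrite /pr eib /= -{2}(lerp1 a b) param_lerp.
have csa : cseg a b (v ia).
  rewrite eia /=; suff: cseg a b (lerp a b 0) by rewrite lerp0.
  by apply: cseg_lerp; lra.
have csb : cseg a b (v ib).
  rewrite eib /=; suff: cseg a b (lerp a b 1) by rewrite lerp1.
  by apply: cseg_lerp; lra.
pose Pp := fun l : 'I_n => `[< cseg a b (v l) >] && (t0 < pr l).
pose Pm := fun l : 'I_n => `[< cseg a b (v l) >] && (pr l < t0).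
have Ppib : Pp ib by rewrite /Pp prib t01 andbT; apply/asboolP.
have Pmia : Pm ia by rewrite /Pm pria t00 andbT; apply/asboolP.
have [p Ppp pmin] := @arg_minP _ _ _ ib Pp pr Ppib.
have [m Pmm mmax] := @arg_maxP _ _ _ ia Pm pr Pmia.
move: Ppp Pmm => /andP[/asboolP csp hp] /andP[/asboolP csm hm].
have [p0 p1 ep] := onS _ csp.
have [m0 m1 em] := onS _ csm.
exists p, m, a, b, t0, (pr p), (pr m); split; first by [].
split => //.
move=> l; apply/idP/idP.
- move/asboolP => [_ nlj [s' hs' [hos' csl hbtw]]].
  have es' := uniq_s _ hs' hos'; rewrite es' /= in csl.
  have [l0 l1 el] := onS _ csl.
  have nt : pr l != t0.
    apply/eqP => e; move/eqP: nlj; apply; apply: vtx_inj; by rewrite el ej e.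
  case: (ltgtP (pr l) t0) nt => // hl _.
  +
    have Pml : Pm l by rewrite /Pm hl andbT; apply/asboolP.
    have := mmax _ Pml => /= hle.
    case: (ltgtP (pr l) (pr m)) hle => // [hlt|heq] _.
      exfalso; apply: (hbtw m); rewrite ej el em; apply: btw; left.
      by rewrite hlt hm.
    by apply/orP; right; apply/eqP/vtx_inj; rewrite el em heq.
  + have Ppl : Pp l by rewrite /Pp hl andbT; apply/asboolP.
    have := pmin _ Ppl => /= hle.
    case: (ltgtP (pr l) (pr p)) hle => // [hlt|heq] _.
      exfalso; apply: (hbtw p); rewrite ej el ep; apply: btw; right.
      by rewrite hlt hp.
    by apply/orP; left; apply/eqP/vtx_inj; rewrite el ep heq.
- have ptj : pr j = t0 by rewrite /pr ej param_lerp.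
  case/orP => /eqP ->; apply/asboolP; split => //.
  + by apply/eqP => e; move: hp; rewrite -ptj -e; lra.
  + exists (a, b) => //; split => // k'; rewrite ej ep => /oseg_lerp [la [l0 l1 ek]].
    have h1 : 0 < la * (pr p - t0) by apply: mulr_gt0 => //; lra.
    have h2 : la * (pr p - t0) < pr p - t0.
      by rewrite -[ltRHS]mul1r ltr_pM2r //; lra.
    have csk : cseg a b (v k') by rewrite ek; apply: cseg_lerp; lra.
    have prk : pr k' = t0 + la * (pr p - t0) by rewrite /pr ek param_lerp.
    have Ppk : Pp k' by rewrite /Pp prk; apply/andP; split; [apply/asboolP | lra].
    have := pmin _ Ppk; rewrite prk /=; lra.
  + by apply/eqP => e; move: hm; rewrite -ptj -e; lra.
  + exists (a, b) => //; split => // k'; rewrite ej em => /oseg_lerp [la [l0 l1 ek]].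
    have h1 : 0 < la * (t0 - pr m) by apply: mulr_gt0 => //; lra.
    have h2 : la * (t0 - pr m) < t0 - pr m.
      by rewrite -[ltRHS]mul1r ltr_pM2r //; lra.
    have csk : cseg a b (v k') by rewrite ek; apply: cseg_lerp; lra.
    have prk : pr k' = t0 + la * (pr m - t0) by rewrite /pr ek param_lerp.
    have Pmk : Pm k' by rewrite /Pm prk; apply/andP; split; [apply/asboolP | lra].
    have := mmax _ Pmk; rewrite prk /=; lra.
Qed.

End G2.

End MG2.
Import MG2.

Module MG3.
Import numFieldNormedType.Exports.
Import Order.TTheory GRing.Theory Num.Theory.
Local Open Scope ring_scope.
Set Implicit Arguments. Unset Strict Implicit. Unset Printing Implicit Defensive.

Section G3.
Variable R : realType.
Variables (segs : seq ((R * R) * (R * R))) (bpts : seq (R * R)).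
Local Notation n := (nverts segs bpts).
Local Notation v := (@vtx R segs bpts).

Lemma pdist_ge0 (p q : R * R) : 0 <= pdist p q.
Proof. exact: sqrtr_ge0. Qed.

Lemma span_ge0 (i : 'I_n) : 0 <= nbr_span i.
Proof. exact: bigmax_ge_id. Qed.

Lemma rate_ge0 (i j : 'I_n) : 0 <= rate i j.
Proof.
rewrite /rate; case: ifP => // _.
by rewrite invr_ge0 mulr_ge0 ?pdist_ge0 ?span_ge0.
Qed.

Lemma rate_diag (i : 'I_n) : rate i i = 0.
Proof.
rewrite /rate /nbr; case: ifP => // /asboolP [_ h _].
by rewrite eqxx in h.
Qed.

Lemma rate_nnbr (i j : 'I_n) : ~~ nbr i j -> rate i j = 0.
Proof. by rewrite /rate => /negPf ->. Qed.

Lemma geoA (j : 'I_n) : is_Tgraph segs bpts -> v j \notin bpts ->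
  \sum_l rate j l * (sq (v l) - sq (v j)) = 1.
Proof.
move=> HT hj.
have [p [m [a [b [t0 [tp [tm [[hs ab ej ep em] [hm0 hmt htp hp1 hn]]]]]]]]] :=
  nbr_struct HT hj.
have E2p := E2_gt0 ab.
set D := Num.sqrt (E2 a b).
have Dp : 0 < D by rewrite sqrtr_gt0.
have pm : p != m.
  apply/eqP => e; move: ep; rewrite e em => /(lerp_inj ab); lra.
have span : nbr_span j = (tp - tm) * D.
  apply/le_anti/andP; split.
    apply: bigmax_le => [|l]; first by rewrite mulr_ge0 //; lra.
    move=> nl; apply: bigmax_le => [|k nk]; first by rewrite mulr_ge0 //; lra.
    have key : forall x y, (x == tp) || (x == tm) -> (y == tp) || (y == tm) ->
        `|x - y| * D <= (tp - tm) * D.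
      move=> x y hx hy; rewrite ler_pM2r // ler_norml.
      by case/orP: hx => /eqP ->; case/orP: hy => /eqP ->; apply/andP; split; lra.
    rewrite hn in nl; rewrite hn in nk.
    case/orP: nl => /eqP ->; case/orP: nk => /eqP ->;
      rewrite ?ep ?em pdist_lerp; apply: key; by rewrite eqxx ?orbT.
  apply: (@bigmax_sup _ _ _ _ p); first by rewrite hn eqxx.
  apply: (@bigmax_sup _ _ _ _ m); first by rewrite hn eqxx orbT.
  by rewrite ep em pdist_lerp ger0_norm //; lra.
rewrite (bigD1 p) //= (bigD1 m) /=; last by rewrite eq_sym.
rewrite big1 ?addr0; last first.
  move=> l /andP[lp lm]; rewrite rate_nnbr ?mul0r //.
  by rewrite hn negb_or lp lm.
rewrite /rate !hn !eqxx /= ?orbT span ej ep em !pdist_lerp -/D.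
rewrite ger0_norm; last lra.
rewrite ler0_norm; last lra.
have h1 : tp - t0 != 0 by apply/eqP; lra.
have h2 : tm - t0 != 0 by apply/eqP; lra.
have h3 : tp - tm != 0 by apply/eqP; lra.
have hD : D != 0 by rewrite gt_eqF.
have hE : E2 a b != 0 by rewrite gt_eqF.
have hD2 : D ^+ 2 = E2 a b by rewrite /D sqr_sqrtr // ltW.
transitivity (E2 a b / D ^+ 2); last by rewrite hD2 divff.
clearbody D; rewrite /sq /lerp /E2 /=.
by field; rewrite hD h3 h2 h1.
Qed.

End G3.

Section G3b.
Variable R : realType.
Variables (segs : seq ((R * R) * (R * R))) (bpts : seq (R * R)).
Local Notation n := (nverts segs bpts).
Local Notation v := (@vtx R segs bpts).

Lemma alg_bound (x1 x2 d1 d2 e L r : R) : e ^+ 2 <= 1 ->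
  d1 ^+ 2 + d2 ^+ 2 <= L ^+ 2 -> 0 <= L -> L <= r -> x1 ^+ 2 + x2 ^+ 2 < r ^+ 2 ->
  (x1 + e * d1) ^+ 2 + (x2 + e * d2) ^+ 2 <= 4 * r ^+ 2.
Proof.
move=> he hd hL hLr hx.
have h1 : (x1 + e * d1) ^+ 2 + (x2 + e * d2) ^+ 2 <=
   2 * (x1 ^+ 2 + x2 ^+ 2) + 2 * (e ^+ 2 * (d1 ^+ 2 + d2 ^+ 2)).
  have := sqr_ge0 (x1 - e * d1); have := sqr_ge0 (x2 - e * d2).
  move=> a b; rewrite -subr_ge0.
  have -> : 2 * (x1 ^+ 2 + x2 ^+ 2) + 2 * (e ^+ 2 * (d1 ^+ 2 + d2 ^+ 2)) -
     ((x1 + e * d1) ^+ 2 + (x2 + e * d2) ^+ 2) = (x1 - e * d1) ^+ 2 + (x2 - e * d2) ^+ 2 by ring.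
  exact: addr_ge0.
have h2 : e ^+ 2 * (d1 ^+ 2 + d2 ^+ 2) <= d1 ^+ 2 + d2 ^+ 2.
  rewrite -[leRHS]mul1r ler_wpM2r //; exact: addr_ge0 (sqr_ge0 _) (sqr_ge0 _).
have h3 : L ^+ 2 <= r ^+ 2 by rewrite lerXn2r // ?nnegrE //; lra.
lra.
Qed.

Lemma geoB (j l : 'I_n) (L r : R) : is_Tgraph segs bpts -> v j \notin bpts ->
  (forall s, s \in segs -> pdist s.1 s.2 <= L) -> L <= r ->
  sq (v j) < r ^+ 2 -> nbr j l -> sq (v l) <= 4 * r ^+ 2.
Proof.
move=> HT hj hlen hLr hvj nl.
have [p [m [a [b [t0 [tp [tm [[hs ab ej ep em] [hm0 hmt htp hp1 hn]]]]]]]]] :=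
  nbr_struct HT hj.
have hL := hlen _ hs; rewrite /= /pdist /pnorm /= in hL.
have hE : (b.1 - a.1) ^+ 2 + (b.2 - a.2) ^+ 2 <= L ^+ 2.
  have -> : (b.1 - a.1) ^+ 2 + (b.2 - a.2) ^+ 2 = (a.1 - b.1) ^+ 2 + (a.2 - b.2) ^+ 2 by ring.
  have hs0 := sqrtr_ge0 ((a.1 - b.1) ^+ 2 + (a.2 - b.2) ^+ 2).
  rewrite -[X in X <= _](@sqr_sqrtr _ ((a.1 - b.1) ^+ 2 + (a.2 - b.2) ^+ 2)); last first.
    exact: addr_ge0 (sqr_ge0 _) (sqr_ge0 _).
  by rewrite lerXn2r // nnegrE //; lra.
have hL0 : 0 <= L by apply: le_trans hL; exact: sqrtr_ge0.
rewrite ej /sq /lerp /= in hvj.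
have hkey : forall tl, 0 <= tl -> tl <= 1 -> v l = lerp a b tl -> sq (v l) <= 4 * r ^+ 2.
  move=> tl h0 h1 ->; rewrite /sq /lerp /=.
  have -> : a.1 + tl * (b.1 - a.1) = (a.1 + t0 * (b.1 - a.1)) + (tl - t0) * (b.1 - a.1) by ring.
  have -> : a.2 + tl * (b.2 - a.2) = (a.2 + t0 * (b.2 - a.2)) + (tl - t0) * (b.2 - a.2) by ring.
  apply: alg_bound; [| exact: hE | exact: hL0 | exact: hLr | exact: hvj].
  have u : 0 <= (1 - (tl - t0)) * (1 + (tl - t0)) by apply: mulr_ge0; lra.
  have -> : (tl - t0) ^+ 2 = 1 - (1 - (tl - t0)) * (1 + (tl - t0)) by ring.
  lra.
rewrite hn in nl; case/orP: nl => /eqP el.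
  by apply: (hkey tp); [lra | lra | rewrite el].
by apply: (hkey tm); [lra | lra | rewrite el].
Qed.

End G3b.

End MG3.
Import MG3.

Module MMain.
Import numFieldNormedType.Exports.
Import Order.TTheory GRing.Theory Num.Theory.
Local Open Scope classical_set_scope.
Local Open Scope ring_scope.
Set Implicit Arguments. Unset Strict Implicit. Unset Printing Implicit Defensive.

Section Main.
Variable R : realType.
Variables (segs : seq ((R * R) * (R * R))) (bpts : seq (R * R)).
Local Notation n := (nverts segs bpts).
Local Notation v := (@vtx R segs bpts).
Local Notation K r := (killed_gen segs bpts r).

Lemma sq_pnorm (p : R * R) : sq p = pnorm p ^+ 2.
Proof. by rewrite /pnorm sqr_sqrtr // addr_ge0 // sqr_ge0. Qed.

Lemma alive_sq (r : R) (j : 'I_n) : alive r j -> sq (v j) < r ^+ 2.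
Proof.
move=> /andP[_ h]; rewrite sq_pnorm.
have h0 : 0 <= pnorm (v j) by exact: sqrtr_ge0.
rewrite ltr_pXn2r // ?nnegrE //; lra.
Qed.

Lemma Kentry (r : R) (j l : 'I_n) :
  K r j l = if alive r j && alive r l then
    (if j == l then - \sum_(k | k != j) rate j k else rate j l) else 0.
Proof. by rewrite /killed_gen !mxE. Qed.

Lemma K_metzler (r : R) (j l : 'I_n) : j != l -> 0 <= K r j l.
Proof.
move=> /negPf jl; rewrite Kentry jl; case: ifP => // _; exact: rate_ge0.
Qed.

Lemma K_rowzero (r : R) (j l : 'I_n) : ~~ alive r j -> K r j l = 0.
Proof. by move=> /negPf h; rewrite Kentry h. Qed.

Lemma Ka_le0 (r : R) (j : 'I_n) : (K r *m alive_ind segs bpts r) j 0 <= 0.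
Proof.
rewrite mxE; case hj : (alive r j); last first.
  by rewrite big1 // => l _; rewrite K_rowzero ?hj // mul0r.
rewrite (bigD1 j) //= Kentry hj eqxx /= /alive_ind mxE hj mulr1.
rewrite addrC subr_le0; apply: ler_sum => l lj.
rewrite Kentry hj eq_sym (negPf lj) mxE /=.
case: (alive r l) => /=; first by rewrite mulr1.
by rewrite mul0r rate_ge0.
Qed.

Definition gvec (r : R) : 'cV[R]_n :=
  \col_j ((alive r j)%:R * (4 * r ^+ 2 - sq (v j))).

Lemma Kg_le (L r : R) (j : 'I_n) : is_Tgraph segs bpts ->
  (forall s, s \in segs -> pdist s.1 s.2 <= L) -> L <= r ->
  (K r *m gvec r) j 0 + alive_ind segs bpts r j 0 <= 0.
Proof.
move=> HT hlen hLr.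
rewrite mxE /alive_ind mxE; case hj : (alive r j); last first.
  by rewrite big1 ?add0r // => l _; rewrite K_rowzero ?hj // mul0r.
have hjb : v j \notin bpts by case/andP: hj.
have hjr := alive_sq hj.
rewrite (bigD1 j) //= Kentry hj eqxx /= /gvec mxE hj mul1r.
pose gt (l : 'I_n) := 4 * r ^+ 2 - sq (v l).
have step : \sum_(l | l != j) K r j l * (\col_j0 ((alive r j0)%:R * (4 * r ^+ 2 - sq (v j0)))) l 0
   <= \sum_(l | l != j) rate j l * gt l.
  apply: ler_sum => l lj.
  rewrite Kentry hj eq_sym (negPf lj) mxE /=.
  case hl: (alive r l) => /=; first by rewrite mul1r.
  rewrite mul0r.
  case nl : (nbr j l); last by rewrite rate_nnbr ?nl // mul0r.
  apply: mulr_ge0; first exact: rate_ge0.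
  rewrite /gt subr_ge0; exact: geoB HT hjb hlen hLr hjr nl.
have hA := geoA HT hjb.
rewrite (bigD1 j) //= rate_diag mul0r add0r in hA.
have E : \sum_(l | l != j) rate j l * gt l =
   \sum_(k | k != j) rate j k * gt j - \sum_(l | l != j) rate j l * (sq (v l) - sq (v j)).
  rewrite -sumrB; apply: eq_bigr => l _; rewrite /gt; ring.
rewrite hA in E.
have : \sum_(k | k != j) rate j k * gt j = (\sum_(k | k != j) rate j k) * (4 * r ^+ 2 - sq (v j)).
  by rewrite mulr_suml.
move=> E2; lra.
Qed.

End Main.


Lemma surv_ex (R : realType) (segs : seq ((R * R) * (R * R))) (bpts : seq (R * R))
    (r t : R) (i : 'I_(nverts segs bpts)) :
  survival r t i = ex (killed_gen segs bpts r) (alive_ind segs bpts r) t i.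
Proof.
rewrite /survival /ex /pseries /series /=.
apply: (congr1 (fun f : nat -> R => lim (f @ \oo))); apply/funext => m; rewrite /series /= big_mkord.
apply: eq_bigr => k _; rewrite /coef /mp /mpow; ring.
Qed.

End MMain.
Import MMain.

Theorem lemma2 (R : realType) (segs : seq ((R * R) * (R * R))) (bpts : seq (R * R))
    (L r : R) (i : 'I_(nverts segs bpts)) (n : nat) :
  is_Tgraph segs bpts ->
  (forall s, s \in segs -> pdist s.1 s.2 <= L) ->
  L <= r ->
  pnorm (vtx i) < r ->
  (1 <= n)%N ->
  survival r (18 * n%:R * r ^+ 2) i <= (2 ^+ n)^-1.
Proof.
move=> HT hlen hLr hi hn.
have r0 : 0 < r by apply: le_lt_trans hi; exact: sqrtr_ge0.
rewrite surv_ex.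
have -> : 18 * n%:R * r ^+ 2 = n.-1.+1%:R * (18 * r ^+ 2) by rewrite prednK //; ring.
have -> : (2 ^+ n) = 2 ^+ n.-1.+1 :> R by rewrite prednK.
apply: (@iterate R (nverts segs bpts) _ (gvec segs bpts r) _ (4 * r ^+ 2)).
- by move=> a b; apply: K_metzler.
- move=> j; rewrite mxE; case hj : (alive r j); last by rewrite mul0r.
  rewrite mul1r subr_ge0; have := alive_sq hj; have := sqr_ge0 r; lra.
- move=> j; rewrite mxE; case hj : (alive r j).
    rewrite mul1r; have : 0 <= sq (vtx j) by rewrite sq_pnorm sqr_ge0.
    lra.
  by rewrite mul0r mulr_ge0 // sqr_ge0.
- move=> j; exact: Kg_le HT hlen hLr.
- move=> j; exact: Ka_le0.
- by rewrite mulr_gt0 // exprn_gt0.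
- have : 0 <= r ^+ 2 by rewrite sqr_ge0.
  lra.
- move=> l; rewrite /alive_ind mxE; case hl : (alive r l); first by left.
  by right; split => // j; rewrite K_rowzero ?hl.
Qed.
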